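(* Fix bidder $i$ and $v_{-i}$, and assume $f_{i,k}>0$ for all $k$. Suppose $k\mapsto x_i(z_{i,k},v_{-i})$ is non-decreasing, the actual payments $p_i(z_{i,k},v_{-i})\ge0$ satisfy $p_i(z_{i,\ell},v_{-i})^2= z_{i,\ell}x_i(z_{i,\ell},v_{-i})-\sum_{j=1}^{\ell-1}(z_{i,j+1}-z_{i,j})x_i(z_{i,j},v_{-i})$ for all $\ell$, and $p_i(z_{i,k},v_{-i})>0$ for all $k$. Then $$\sum_{k=1}^{K_i} f_{i,k}\,p_i(z_{i,k},v_{-i})\ \ge\ \sum_{k=1}^{K_i} f_{i,k}\,\frac{\varphi_{i,k}\,x_i(z_{i,k},v_{-i})}{p_i(z_{i,k},v_{-i})}.$$
   Context: Bidder $i$'s type space is $V_i=\{z_{i,1}<\dots<z_{i,K_i}\}\subset[0,\infty)$, with the convention $z_{i,K_i+1}=z_{i,K_i}$; $f_{i,k}$ is the probability of $z_{i,k}$ and $F_{i,k}=\sum_{j\le k}f_{i,j}$. The (discrete) virtual value is $\varphi_{i,k}=z_{i,k}-(z_{i,k+1}-z_{i,k})\frac{1-F_{i,k}}{f_{i,k}}$. $x_i(\cdot,v_{-i}):V_i\to[0,1]$ is bidder $i$'s allocation given the others' types $v_{-i}$. *)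

(* Defs.v *)
From HB Require Import structures.
From mathcomp Require Import all_boot all_order all_algebra.
Set Implicit Arguments. Unset Strict Implicit. Unset Printing Implicit Defensive.
Import Order.TTheory GRing.Theory Num.Theory.
Local Open Scope ring_scope.

(* Types are indexed 0..K-1 (paper: 1..K).  Sequences are functions nat -> R,
   only their values at indices < K matter. *)

(* z_{k+1} with the convention z_{K+1} = z_K (0-indexed: z_K := z_{K-1}). *)
Definition znext (R : pzRingType) (K : nat) (z : nat -> R) (k : nat) : R :=
  if (k.+1 < K)%N then z k.+1 else z k.

Definition cdf (R : pzRingType) (f : nat -> R) (k : nat) : R :=
  \sum_(j < k.+1) f j.

Definition virtual_value (R : fieldType) (K : nat) (z f : nat -> R) (k : nat) : R :=
  z k - (znext K z k - z k) * (1 - cdf f k) / f k.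

(* Main.v *)
Require Import Defs.
From HB Require Import structures.
From mathcomp Require Import all_boot all_order all_algebra.
From mathcomp Require Import ring lra.
Import Order.TTheory GRing.Theory Num.Theory.
Local Open Scope ring_scope.

Lemma abel (R : realFieldType) (K : nat) (W q : nat -> R) :
  W 0%N = 0 -> (forall n, (n < K)%N -> 0 <= W n) ->
  (forall n, (n.+1 < K)%N -> q n.+1 <= q n) ->
  forall n, (n <= K)%N -> W n * q n.-1 <= \sum_(k < n) (W k.+1 - W k) * q k.
Proof.
move=> W0 Wge qdec; elim=> [|n IH] hn.
  by rewrite big_ord0 W0 mul0r.
rewrite big_ord_recr /=.
have h1 := IH (ltnW hn).
have h2 : W n * q n <= W n * q n.-1.
  clear IH h1; case: n hn => [|n] hn; first by [].
  rewrite /=.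
  by apply: ler_wpM2l; [apply: Wge | apply: qdec].
set S := \sum_(i < n) _ in h1 *.
lra.
Qed.

Theorem mainTheorem3 (R : realFieldType) (K : nat) (z f x p : nat -> R)
  (hz0 : forall k, (k < K)%N -> 0 <= z k)
  (hzinc : forall k, (k.+1 < K)%N -> z k < z k.+1)
  (hfpos : forall k, (k < K)%N -> 0 < f k)
  (hfsum : \sum_(k < K) f k = 1)
  (hx01 : forall k, (k < K)%N -> 0 <= x k <= 1)
  (hxmono : forall k, (k.+1 < K)%N -> x k <= x k.+1)
  (hpnn : forall k, (k < K)%N -> 0 <= p k)
  (hpsq : forall l, (l < K)%N ->
      p l ^+ 2 = z l * x l - \sum_(j < l) (z j.+1 - z j) * x j)
  (hppos : forall k, (k < K)%N -> 0 < p k) :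
  \sum_(k < K) f k * p k >=
  \sum_(k < K) f k * (virtual_value K z f k * x k / p k).
Proof.
pose S n := \sum_(j < n) (z j.+1 - z j) * x j.
pose G n := 1 - \sum_(j < n) f j.
pose W n := G n * S n.
have GK : G K = 0 by rewrite /G hfsum subrr.
have Gge : forall n, (n <= K)%N -> 0 <= G n.
  move=> n hn; rewrite /G subr_ge0 -hfsum (big_ord_widen K f hn).
  rewrite [X in _ <= X](bigID (fun i : 'I_K => (i < n)%N)) /= lerDl.
  by apply: sumr_ge0 => i _; apply/ltW/hfpos.
have Sge : forall n, (n < K)%N -> 0 <= S n.
  move=> n hn; apply: sumr_ge0 => i _; apply: mulr_ge0.
    have := hzinc i (leq_ltn_trans (ltn_ord i) hn); lra.
  by case/andP: (hx01 i (ltn_trans (ltn_ord i) hn)).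
have key : forall k, (k < K)%N ->
  f k * p k - f k * (virtual_value K z f k * x k / p k) = (W k.+1 - W k) * (p k)^-1.
  move=> k hk.
  have pk := hppos k hk; have fk := hfpos k hk.
  have e1 : G k = G k.+1 + f k by rewrite /G big_ord_recr /=; ring.
  have e2 : S k.+1 = S k + (z k.+1 - z k) * x k by rewrite /S big_ord_recr.
  have e3 : (znext K z k - z k) * x k * G k.+1 = (z k.+1 - z k) * x k * G k.+1.
    rewrite /znext; case: ifP => // hk1.
    have -> : k.+1 = K by apply/eqP; rewrite eqn_leq hk leqNgt hk1.
    by rewrite GK !mulr0.
  have e4 : 1 - cdf f k = G k.+1 by [].
  have hp2 := hpsq k hk; rewrite -/(S k) in hp2.
  rewrite /W e1 e2 /virtual_value e4.
  have pn0 : p k != 0 by rewrite gt_eqF.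
  have fn0 : f k != 0 by rewrite gt_eqF.
  apply: (mulIf pn0); rewrite mulrBl -!mulrA mulVf // mulr1.
  rewrite -expr2 hp2.
  rewrite [X in _ - X = _](_ : _ = f k * z k * x k - (znext K z k - z k) * x k * G k.+1); last first.
    by field.
  rewrite e3; ring.
rewrite -subr_ge0 -sumrB.
rewrite (eq_bigr (fun k : 'I_K => (W k.+1 - W k) * (p k)^-1)); last first.
  by move=> i _; apply: key.
have W0 : W 0%N = 0 by rewrite /W /S big_ord0 mulr0.
have Wge : forall n, (n < K)%N -> 0 <= W n.
  by move=> n hn; apply: mulr_ge0; [apply: Gge; apply: ltnW | apply: Sge].
have qdec : forall n, (n.+1 < K)%N -> (p n.+1)^-1 <= (p n)^-1.
  move=> n hn.
  have hn' : (n < K)%N := ltnW hn.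
  have a := hppos n hn'; have b := hppos n.+1 hn.
  have sq : p n ^+ 2 <= p n.+1 ^+ 2.
    rewrite (hpsq n hn') (hpsq n.+1 hn) big_ord_recr /=.
    have h0 : 0 <= z n.+1 * (x n.+1 - x n).
      by apply: mulr_ge0; [apply: hz0 | rewrite subr_ge0; apply: hxmono].
    set T := \sum_(i < n) _. lra.
  have le : p n <= p n.+1.
    by rewrite -(ler_pXn2r (isT : (0 < 2)%N)) // nnegrE ltW.
  by rewrite lef_pV2 // posrE.
have hA := @abel R K W (fun k => (p k)^-1) W0 Wge qdec K (leqnn K).
have WK : W K = 0 by rewrite /W GK mul0r.
rewrite WK mul0r in hA. exact hA. Qed.
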